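(* Consider $\dot x=f(x,u)$ with $x\in\mathbb{R}^n$, $f:\mathbb{R}^n\times\mathbb{R}^m\to\mathbb{R}^n$ continuous, $f(0,0)=0$, and suppose $V:\mathbb{R}^n\to\mathbb{R}_{\ge0}$ is a FxT-ISS Lyapunov function for this system. Let $\sigma\in\mathcal{K}_\infty$ have the form $\sigma(s)=\sum_{i=1}^nc_is^{r_i}$ with $1\le r_1<r_2<\dots<r_n$ and real $c_i\neq0$, and suppose $\sigma'(s)>0$ for all $s>0$. Then $\tilde V(x)=\sigma(V(x))$ is a FxT-ISS Lyapunov function for the system.
   Context: $\mathcal{K}_\infty$: continuous strictly increasing unbounded $\alpha:\mathbb{R}_{\ge0}\to\mathbb{R}_{\ge0}$ with $\alpha(0)=0$. $\mathcal{K}_{\mathrm{FxT}}$: functions $c_1s^{p_1}+c_2s^{p_2}$ with $c_1,c_2>0$, $p_1\in(0,1)$, $p_2>1$. A locally Lipschitz $V:\mathbb{R}^n\to\mathbb{R}_{\ge0}$ is a FxT-ISS Lyapunov function for $\dot x=f(x,u)$ if there exist $\underline\alpha,\overline\alpha,\chi\in\mathcal{K}_\infty$ and $\Psi\in\mathcal{K}_{\mathrm{FxT}}$ such that $\underline\alpha(|x|)\le V(x)\le\overline\alpha(|x|)$ for all $x$, and for all $x\in\mathbb{R}^n$, $u\in\mathbb{R}^m$: $V(x)\ge\chi(|u|)\implies DV(x;f(x,u))\le-\Psi(V(x))$, where $DV(x;v)=\limsup_{h\to0^+}\frac{V(x+hv)-V(x)}{h}$. *)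

(* Defs.v *)
From HB Require Import structures.
From mathcomp Require Import all_boot all_order all_algebra.
From mathcomp Require Import all_classical all_reals all_analysis.
Set Implicit Arguments. Unset Strict Implicit. Unset Printing Implicit Defensive.
Import Order.TTheory GRing.Theory Num.Theory.
Import numFieldNormedType.Exports.
Local Open Scope classical_set_scope.
Local Open Scope ring_scope.

Definition enorm {R : realType} {n : nat} (x : 'rV[R]_n) : R :=
  Num.sqrt (\sum_(i < n) x ord0 i ^+ 2).

Definition Kinf {R : realType} (a : R -> R) : Prop :=
  [/\ a 0 = 0,
      {within `[0, +oo[, continuous a},
      (forall s t : R, 0 <= s -> s < t -> a s < a t)
    & (forall M : R, exists s : R, 0 <= s /\ M < a s)].

Definition KFxT {R : realType} (Psi : R -> R) : Prop :=
  exists c1 c2 p1 p2 : R,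
    [/\ 0 < c1, 0 < c2, 0 < p1 < 1, 1 < p2
      & forall s : R, Psi s = c1 * s `^ p1 + c2 * s `^ p2].

Definition locally_lipschitz {R : realType} {n : nat} (V : 'rV[R]_n -> R) : Prop :=
  forall x : 'rV[R]_n, exists2 d : R, 0 < d &
    exists L : R, forall y z : 'rV[R]_n,
      enorm (y - x) < d -> enorm (z - x) < d ->
      `|V y - V z| <= L * enorm (y - z).

Definition DV {R : realType} {n : nat} (V : 'rV[R]_n -> R) (x v : 'rV[R]_n)
  : \bar R :=
  limf_esup (fun h : R => ((V (x + h *: v) - V x) / h)%:E) (0%R^'+).

Definition FxT_ISS_Lyapunov {R : realType} {n m : nat}
  (f : 'rV[R]_n -> 'rV[R]_m -> 'rV[R]_n) (V : 'rV[R]_n -> R) : Prop :=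
  locally_lipschitz V /\ (forall x, 0 <= V x) /\
  exists (al au chi Psi : R -> R),
    [/\ Kinf al, Kinf au, Kinf chi, KFxT Psi
      & (forall x, al (enorm x) <= V x /\ V x <= au (enorm x))] /\
      (forall (x : 'rV[R]_n) (u : 'rV[R]_m),
          chi (enorm u) <= V x -> (DV V x (f x u) <= (- Psi (V x))%:E)%E).

(* Main.v *)
Require Import Defs.
Set Warnings "-all".
From HB Require Import structures.
From mathcomp Require Import all_boot all_order all_algebra.
From mathcomp Require Import all_classical all_reals all_analysis.
From mathcomp Require Import ring lra.
Import Order.TTheory GRing.Theory Num.Theory.
Import numFieldNormedType.Exports.
Local Open Scope classical_set_scope.
Local Open Scope ring_scope.

Section Esup.
Context {R : realType} (F : set_system R) {FF : Filter F}.

Lemma esup_le_near (g : R -> R) (y : R) :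
  (limf_esup (fun h : R => (g h)%:E) F <= y%:E)%E ->
  forall e, 0 < e -> F [set h | g h <= y + e].
Proof.
move=> H e e0.
have : (limf_esup (fun h : R => (g h)%:E) F < (y + e)%:E)%E.
  by apply: (le_lt_trans H); rewrite lte_fin ltrDl.
rewrite limf_esupE => /ereal_inf_lt [z [V FV <-]] Vlt.
apply: filterS FV => h Vh.
have : ((g h)%:E <= ereal_sup [set (g x)%:E | x in V])%E.
  by apply: ereal_sup_ubound; exists h.
by move=> /le_lt_trans /(_ Vlt); rewrite lte_fin => /ltW.
Qed.

Lemma near_le_esup (g : R -> R) (y : R) :
  (forall e, 0 < e -> F [set h | g h <= y + e]) ->
  (limf_esup (fun h : R => (g h)%:E) F <= y%:E)%E.
Proof.
move=> H; apply/lee_addgt0Pr => e e0.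
rewrite limf_esupE; apply: ge_ereal_inf.
exists (ereal_sup [set (g x)%:E | x in [set h | g h <= y + e]]).
  by exists [set h | g h <= y + e] => //; exact: H.
apply: ge_ereal_sup => _ [h /= hle <-]; by rewrite -EFinD lee_fin.
Qed.
End Esup.

Section KinfLemmas.
Context {R : realType}.
Implicit Types a b : R -> R.

Lemma Kinf_gt0 a s : Kinf a -> 0 < s -> 0 < a s.
Proof. by case=> a0 _ am _ s0; rewrite -a0; apply: am. Qed.

Lemma Kinf_ge0 a s : Kinf a -> 0 <= s -> 0 <= a s.
Proof.
move=> Ka; rewrite le_eqVlt => /predU1P[<-|s0]; first by case: Ka => ->.
exact/ltW/Kinf_gt0.
Qed.

Lemma Kinf_le a s t : Kinf a -> 0 <= s -> s <= t -> a s <= a t.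
Proof.
case=> _ _ am _ s0; rewrite le_eqVlt => /predU1P[->//|st].
exact/ltW/am.
Qed.

Lemma Kinf_le_inv a s t : Kinf a -> 0 <= s -> 0 <= t -> a s <= a t -> s <= t.
Proof.
case=> _ _ am _ s0 t0 ast; rewrite leNgt; apply/negP => ts.
by have := am _ _ t0 ts; rewrite ltNge ast.
Qed.

Lemma Kinf_comp a b : Kinf a -> Kinf b -> Kinf (fun s => a (b s)).
Proof.
move=> Ka Kb; have Ka' := Ka; have Kb' := Kb.
case: Ka' => a0 ac am au; case: Kb' => b0 bc bm bu.
split.
- by rewrite b0 a0.
- apply/continuous_within_itvcyP; split.
    move=> s; rewrite in_itv/= andbT => s0.
    have bs0 : 0 < b s by exact: Kinf_gt0.
    have [ca _] := (continuous_within_itvcyP 0 a).1 ac.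
    have [cb _] := (continuous_within_itvcyP 0 b).1 bc.
    apply: continuous_comp; first by apply: cb; rewrite in_itv/= s0.
    by apply: ca; rewrite in_itv/= bs0.
  have [_ ra] := (continuous_within_itvcyP 0 a).1 ac.
  have [_ rb] := (continuous_within_itvcyP 0 b).1 bc.
  apply/cvgrPdist_lt => eps eps0.
  move/cvgrPdist_lt: ra => /(_ eps eps0).
  rewrite near_withinE => /nbhs_ballP [d /= d0 Hd].
  move/cvgrPdist_lt: rb => /(_ d d0) Hb; near=> s.
  rewrite b0; apply: Hd.
    rewrite /ball /= -b0; near: s; exact: Hb.
  apply: Kinf_gt0 => //; near: s; exact: nbhs_right_gt.
- move=> s t s0 st; apply: am; first exact: Kinf_ge0.
  exact: bm.
- move=> M; have [t [t0 Mt]] := au M; have [s [s0 ts]] := bu t.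
  exists s; split => //; apply: (lt_trans Mt); exact: am.
Unshelve. all: by end_near. Qed.
End KinfLemmas.

Section Enorm.
Context {R : realType} {n : nat}.
Implicit Types x v : 'rV[R]_n.

Lemma enorm_ge0 x : 0 <= enorm x.
Proof. exact: sqrtr_ge0. Qed.

Lemma enormZ (h : R) v : enorm (h *: v) = `|h| * enorm v.
Proof.
rewrite /enorm.
under eq_bigr do rewrite mxE exprMn.
by rewrite -mulr_sumr sqrtrM ?sqr_ge0// sqrtr_sqr.
Qed.

Lemma enorm0 : enorm (0 : 'rV[R]_n) = 0.
Proof. by rewrite -(scale0r (0 : 'rV[R]_n)) enormZ normr0 mul0r. Qed.
End Enorm.

Definition sig {R : realType} {N : nat} (c r : 'I_N -> R) (s : R) := \sum_(i < N) c i * s `^ r i.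
Definition dsig {R : realType} {N : nat} (c r : 'I_N -> R) (s : R) := \sum_(i < N) c i * (r i * s `^ (r i - 1)).

Section Sig.
Context {R : realType} {N : nat} (c r : 'I_N -> R).


Lemma sig_is_derive (s : R) : 0 < s -> is_derive s 1 (sig c r) (dsig c r s).
Proof.
move=> s0.
have -> : sig c r = \sum_(i < N) (fun s => c i * s `^ r i).
  by rewrite fct_sumE.
apply: is_derive_sum => i.
exact: (is_deriveZ (c i) (is_derive1_powR (r i) s0)).
Qed.

Lemma sig_derive1 (s : R) : 0 < s -> derive1 (sig c r) s = dsig c r s.
Proof. by move=> s0; rewrite derive1E; have H := sig_is_derive s s0; rewrite derive_val. Qed.
End Sig.

Section Bounds.
Context {R : realType} {N : nat} (c r : 'I_N.+1 -> R).
Hypothesis Hr1 : forall i, 1 <= r i.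
Hypothesis Hinc : forall i j : 'I_N.+1, (i < j)%N -> r i < r j.

Lemma r_ge0 i : r ord0 <= r i.
Proof.
have [->//|] := eqVneq i ord0; rewrite -val_eqE /= -lt0n => ip.
exact/ltW/Hinc.
Qed.

Lemma r_le i : r i <= r ord_max.
Proof.
have [->//|] := eqVneq i ord_max; rewrite -val_eqE /= => ip.
apply/ltW/Hinc => /=; have := ltn_ord i; rewrite ltnS leq_eqVlt (negPf ip) //.
Qed.

Lemma r_gt0 i : 0 < r i.
Proof. exact: (lt_le_trans ltr01 (Hr1 i)). Qed.

Definition Csum := \sum_(i < N.+1) `|c i|.

Lemma Csum_ge0 : 0 <= Csum.
Proof. by apply: sumr_ge0 => i _. Qed.

Lemma sig_le_small s : 0 <= s <= 1 -> sig c r s <= Csum * s `^ r ord0.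
Proof.
case/andP => s0 s1; rewrite /Csum mulr_suml; apply: ler_sum => i _.
apply: (@le_trans _ _ (`|c i| * s `^ r i)).
  by apply: ler_wpM2r; [exact: powR_ge0|exact: ler_norm].
apply: ler_wpM2l => //.
move: s0; rewrite le_eqVlt => /predU1P[<-|s0].
  by rewrite !powR0 ?gt_eqF ?r_gt0.
by apply: ger_powR; [rewrite s0 s1|exact: r_ge0].
Qed.

Lemma sig_le_big s : 1 <= s -> sig c r s <= Csum * s `^ r ord_max.
Proof.
move=> s1; rewrite /Csum mulr_suml; apply: ler_sum => i _.
apply: (@le_trans _ _ (`|c i| * s `^ r i)).
  by apply: ler_wpM2r; [exact: powR_ge0|exact: ler_norm].
apply: ler_wpM2l => //.
by apply: ler_powR => //; exact: r_le.
Qed.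
End Bounds.

Section Lip.
Context {R : realType} {N : nat} (c r : 'I_N.+1 -> R).
Hypothesis Hr1 : forall i, 1 <= r i.
Hypothesis Hcont : {within `[0, +oo[, continuous (sig c r)}.

Definition Lsig (K : R) := \sum_(i < N.+1) `|c i| * (r i * (K + 1) `^ (r i - 1)).

Lemma Lsig_ge0 K : 0 <= K -> 0 <= Lsig K.
Proof.
move=> K0; apply: sumr_ge0 => i _; apply: mulr_ge0 => //.
apply: mulr_ge0; [exact: (le_trans ler01 (Hr1 i))|exact: powR_ge0].
Qed.

Lemma dsig_bound K x : 0 < x -> x <= K -> `|dsig c r x| <= Lsig K.
Proof.
move=> x0 xK; apply: (le_trans (ler_norm_sum _ _ _)); apply: ler_sum => i _.
rewrite normrM; apply: ler_wpM2l => //.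
have ri0 : 0 <= r i by exact: (le_trans ler01 (Hr1 i)).
rewrite normrM ger0_norm // ger0_norm ?powR_ge0 //.
apply: ler_wpM2l => //; apply: ge0_ler_powR.
- by rewrite subr_ge0.
- by rewrite nnegrE ltW.
- by rewrite nnegrE; apply: addr_ge0 => //; apply: (le_trans (ltW x0)).
- by apply: (le_trans xK); rewrite lerDl.
Qed.

Lemma sig_lip_lt K a b : 0 <= a -> a < b -> b <= K ->
  `|sig c r b - sig c r a| <= Lsig K * `|b - a|.
Proof.
move=> a0 ab bK.
have hd : forall x, x \in `]a, b[ -> is_derive x 1 (sig c r) (dsig c r x).
  move=> x; rewrite in_itv /= => /andP[ax _]; apply: sig_is_derive.
  exact: (le_lt_trans a0 ax).
have sub : `[a, b] `<=` `[0, +oo[.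
  move=> y /=; rewrite !in_itv /= andbT => /andP[ay _]; exact: (le_trans a0).
have [x xab ->] := @MVT R (sig c r) (dsig c r) a b ab hd
  (continuous_subspaceW sub Hcont).
move: xab; rewrite in_itv /= => /andP[ax xb].
- rewrite normrM; apply: ler_wpM2r => //; apply: dsig_bound.
    exact: (le_lt_trans a0 ax).
  exact: (le_trans (ltW xb)).
Qed.

Lemma sig_lip K a b : 0 <= a -> a <= K -> 0 <= b -> b <= K ->
  `|sig c r a - sig c r b| <= Lsig K * `|a - b|.
Proof.
move=> a0 aK b0 bK; case: (ltgtP a b) => [ab|ba|->].
- by rewrite distrC [`|a - b|]distrC; apply: sig_lip_lt.
- exact: sig_lip_lt.
- by rewrite !subrr normr0 mulr0.
Qed.

End Lip.

Lemma sum_cvg_one {R : realType} (F : set_system R) {FF : Filter F} (N : nat)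
  (g : 'I_N.+1 -> R -> R) (j : 'I_N.+1) (l : R) :
  g j x @[x --> F] --> l -> (forall i, i != j -> g i x @[x --> F] --> 0) ->
  (\sum_(i < N.+1) g i x) @[x --> F] --> l.
Proof.
move=> gj gi.
have := @cvg_big R 'I_N.+1 +%R 0 predT add_continuous R F (index_enum 'I_N.+1) g
  (fun i => if i == j then l else 0) FF.
have -> : \big[+%R/0]_(i <- index_enum 'I_N.+1 | predT i) (if i == j then l else 0) = l.
  rewrite (bigD1 j) //= eqxx big1 ?addr0 // => i /negbTE ->; done.
apply => i _; case: eqP => [->//|/eqP]; exact: gi.
Qed.

Lemma powR_cvgy0 {R : realType} (e : R) : e < 0 -> x `^ e @[x --> +oo] --> 0.
Proof.
move=> e0; apply/cvgrPdist_lt => eps eps0.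
have ne0 : 0 < - e by rewrite oppr_gt0.
set M := (eps^-1) `^ ((- e)^-1).
have M0 : 0 <= M by exact: powR_ge0.
near=> x.
have xM : M < x by near: x; apply: nbhs_pinfty_gt; exact: num_real.
have x0 : 0 < x by exact: (le_lt_trans M0 xM).
rewrite sub0r normrN ger0_norm ?powR_ge0 // -[e]opprK powRN.
have H1 : M `^ (- e) < x `^ (- e).
  by apply: gt0_ltr_powR => //; rewrite nnegrE // ltW.
have H2 : M `^ (- e) = eps^-1.
  rewrite /M -powRrM mulVf ?gt_eqF // powRr1 // invr_ge0 ltW //.
rewrite invf_plt ?posrE ?powR_gt0 //.
by rewrite -H2.
Unshelve. all: by end_near. Qed.

Section LB.
Context {R : realType} {N : nat} (c r : 'I_N.+1 -> R).
Hypothesis Hr1 : forall i, 1 <= r i.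
Hypothesis Hinc : forall i j : 'I_N.+1, (i < j)%N -> r i < r j.
Hypothesis Hc : forall i, c i != 0.
Hypothesis Hpos : forall s : R, 0 < s -> 0 < dsig c r s.

Definition P0 (s : R) := \sum_(i < N.+1) c i * (r i * s `^ (r i - r ord0)).
Definition Pn (s : R) := \sum_(i < N.+1) c i * (r i * s `^ (r i - r ord_max)).

Lemma dsig_Pk (k : R) s : 0 < s ->
  dsig c r s = s `^ (k - 1) * \sum_(i < N.+1) c i * (r i * s `^ (r i - k)).
Proof.
move=> s0; rewrite /dsig mulr_sumr; apply: eq_bigr => i _.
rewrite [RHS]mulrCA; congr (_ * _); rewrite [RHS]mulrCA; congr (_ * _).
rewrite -powRD; last by rewrite (gt_eqF s0) implybT.
by congr (_ `^ _); ring.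
Qed.

Lemma Pk_pos (k : R) s : 0 < s -> 0 < \sum_(i < N.+1) c i * (r i * s `^ (r i - k)).
Proof.
move=> s0; have := Hpos s s0; rewrite (@dsig_Pk k s s0).
by rewrite pmulr_rgt0 // powR_gt0.
Qed.

Lemma P0_cvg : P0 s @[s --> 0^'+] --> c ord0 * r ord0.
Proof.
apply: (@sum_cvg_one R _ _ N (fun i s => c i * (r i * s `^ (r i - r ord0))) ord0).
  have -> : (fun x : R => c ord0 * (r ord0 * x `^ (r ord0 - r ord0))) = fun=> c ord0 * r ord0.
    by apply/funext => x; rewrite subrr powRr0 mulr1.
  exact: cvg_cst.
move=> i i0.
have e0 : 0 < r i - r ord0 by rewrite subr_gt0; apply: Hinc; rewrite lt0n.
have := @cvgMr _ _ _ _ _ (c i) _ (@cvgMr _ _ _ _ _ (r i) _ (powR_cvg0 e0)).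
by rewrite !mulr0; apply; exact: filter_class.
Qed.

Lemma Pn_cvg : Pn s @[s --> +oo] --> c ord_max * r ord_max.
Proof.
apply: (@sum_cvg_one R _ _ N (fun i s => c i * (r i * s `^ (r i - r ord_max))) ord_max).
  have -> : (fun x : R => c ord_max * (r ord_max * x `^ (r ord_max - r ord_max))) = fun=> c ord_max * r ord_max.
    by apply/funext => x; rewrite subrr powRr0 mulr1.
  exact: cvg_cst.
move=> i i0.
have e0 : r i - r ord_max < 0.
  rewrite subr_lt0; apply: Hinc => /=.
  have := ltn_ord i; rewrite ltnS leq_eqVlt; case/orP => // /eqP ei.
  by exfalso; move: i0; rewrite -val_eqE /= ei eqxx.
have := @cvgMr _ _ _ _ _ (c i) _ (@cvgMr _ _ _ _ _ (r i) _ (powR_cvgy0 _ e0)).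
by rewrite !mulr0; apply; exact: filter_class.
Qed.

Lemma c0_pos : 0 < c ord0 * r ord0.
Proof.
have l0 : c ord0 * r ord0 != 0.
  by rewrite mulf_neq0 // gt_eqF // (lt_le_trans ltr01 (Hr1 _)).
rewrite lt_neqAle eq_sym l0 /= leNgt; apply/negP => lt0.
have H1 : \forall t \near 0^'+, P0 t < 0 by apply: (cvgr_lt _ P0_cvg).
have H2 : \forall s \near 0^'+, 0 < P0 s.
  near=> s; apply: Pk_pos; near: s; exact: nbhs_right_gt.
have [s [a b]] : exists s, P0 s < 0 /\ 0 < P0 s.
  by apply: (@filter_ex _ (nbhs (0:R)^'+)); exact: filterI H1 H2.
by move: (lt_trans a b); rewrite ltxx.
Unshelve. all: by end_near. Qed.

Lemma cn_pos : 0 < c ord_max * r ord_max.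
Proof.
have l0 : c ord_max * r ord_max != 0.
  by rewrite mulf_neq0 // gt_eqF // (lt_le_trans ltr01 (Hr1 _)).
rewrite lt_neqAle eq_sym l0 /= leNgt; apply/negP => lt0.
have H1 : \forall t \near +oo, Pn t < 0 by apply: (cvgr_lt _ Pn_cvg).
have H2 : \forall s \near +oo, 0 < Pn s.
  near=> s; apply: Pk_pos; near: s; apply: nbhs_pinfty_gt; exact: num_real.
have [s [a b]] : exists s, Pn s < 0 /\ 0 < Pn s.
  by apply: (@filter_ex _ (pinfty_nbhs R)); exact: filterI H1 H2.
by move: (lt_trans a b); rewrite ltxx.
Unshelve. all: by end_near. Qed.

End LB.

Section LB2.
Context {R : realType} {N : nat} (c r : 'I_N.+1 -> R).
Hypothesis Hr1 : forall i, 1 <= r i.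
Hypothesis Hinc : forall i j : 'I_N.+1, (i < j)%N -> r i < r j.
Hypothesis Hc : forall i, c i != 0.
Hypothesis Hpos : forall s : R, 0 < s -> 0 < dsig c r s.

Lemma LB0 : exists2 d, 0 < d & forall s, 0 < s -> s < d -> c ord0 * r ord0 / 2 < P0 c r s.
Proof.
have l0 := c0_pos c r Hr1 Hinc Hc Hpos.
have : \forall s \near 0^'+, c ord0 * r ord0 / 2 < P0 c r s.
  apply: (cvgr_gt _ (P0_cvg c r Hinc)); lra.
rewrite near_withinE => /nbhs_ballP [d /= d0 Hd].
exists d => // s s0 sd; apply: Hd => //.
by rewrite /ball /= sub0r normrN gtr0_norm.
Qed.

Lemma LBn : exists M, forall s, M < s -> c ord_max * r ord_max / 2 < Pn c r s.
Proof.
have l0 := cn_pos c r Hr1 Hinc Hc Hpos.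
have : \forall s \near +oo, c ord_max * r ord_max / 2 < Pn c r s.
  apply: (cvgr_gt _ (Pn_cvg c r Hinc)); lra.
case=> M [_ HM]; by exists M.
Qed.

Lemma dsig_derivable (s : R) : 0 < s -> derivable (dsig c r) s 1.
Proof.
move=> s0.
have -> : dsig c r = \sum_(i < N.+1) (fun s => c i * (r i * s `^ (r i - 1))).
  by rewrite fct_sumE.
apply: derivable_sum => i.
apply: (@ex_derive _ _ _ _ _ _ ((c i) *: ((r i) *: ((r i - 1) * s `^ (r i - 1 - 1))))).
apply: is_deriveZ; apply: is_deriveZ; exact: is_derive1_powR.
Qed.

Lemma dsig_min a b : 0 < a -> a <= b ->
  exists2 m, 0 < m & forall s, a <= s -> s <= b -> m <= dsig c r s.
Proof.
move=> a0 ab.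
have cont : {within `[a, b], continuous (dsig c r)}.
  apply: derivable_within_continuous => x; rewrite in_itv /= => /andP[ax _].
  apply: dsig_derivable; exact: (lt_le_trans a0 ax).
have [x xab Hx] := EVT_min ab cont.
exists (dsig c r x).
  apply: Hpos; move: xab; rewrite in_itv /= => /andP[ax _]; exact: (lt_le_trans a0 ax).
by move=> s sa sb; apply: Hx; rewrite in_itv /= sa sb.
Qed.

End LB2.

Section LB3.
Context {R : realType} {N : nat} (c r : 'I_N.+1 -> R).
Hypothesis Hr1 : forall i, 1 <= r i.
Hypothesis Hinc : forall i j : 'I_N.+1, (i < j)%N -> r i < r j.
Hypothesis Hc : forall i, c i != 0.
Hypothesis Hpos : forall s : R, 0 < s -> 0 < dsig c r s.

Lemma dsig_lb : exists2 m, 0 < m & forall s, 0 < s ->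
  (s <= 1 -> m * s `^ (r ord0 - 1) <= dsig c r s) /\
  (1 <= s -> m * s `^ (r ord_max - 1) <= dsig c r s).
Proof.
have [d d0 Hd] := LB0 c r Hr1 Hinc Hc Hpos.
have [M HM] := LBn c r Hr1 Hinc Hc Hpos.
have k00 := c0_pos c r Hr1 Hinc Hc Hpos.
have kn0 := cn_pos c r Hr1 Hinc Hc Hpos.
set k0 := c ord0 * r ord0 / 2 in Hd.
set kn := c ord_max * r ord_max / 2 in HM.
have k0p : 0 < k0 by rewrite /k0; lra.
have knp : 0 < kn by rewrite /kn; lra.
set d1 := Num.min (d / 2) 1.
set M1 := Num.max (M + 1) 1.
have d10 : 0 < d1 by rewrite lt_min; apply/andP; split => //; lra.
have d11 : d1 <= 1 by rewrite ge_min lexx orbT.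
have d1d : d1 < d by rewrite gt_min; apply/orP; left; lra.
have M11 : 1 <= M1 by rewrite le_max lexx orbT.
have M1M : M < M1 by rewrite lt_max; apply/orP; left; lra.
have M10 : 0 < M1 by lra.
have [m0 m00 Hm0] := dsig_min c r Hpos d1 M1 d10 (le_trans d11 M11).
set pw := M1 `^ (r ord_max - 1).
have pw0 : 0 < pw by rewrite powR_gt0.
set m := Num.min (Num.min k0 kn) (Num.min m0 (m0 / pw)).
have mk0 : m <= k0 by rewrite !ge_min lexx.
have mkn : m <= kn by rewrite !ge_min lexx !orbT.
have mm0 : m <= m0 by rewrite !ge_min lexx !orbT.
have mm0p : m <= m0 / pw by rewrite !ge_min lexx !orbT.
exists m.
  by rewrite !lt_min k0p knp m00 divr_gt0.
move=> s s0; split => hs.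
- case: (ltP s d1) => sd1.
    rewrite (@dsig_Pk _ _ c r (r ord0) s s0) mulrC.
    apply: ler_wpM2l; first exact: powR_ge0.
    apply: (le_trans mk0); apply/ltW/Hd => //; exact: (lt_trans sd1).
  apply: (le_trans _ (Hm0 s sd1 (le_trans hs M11))).
  apply: (le_trans (y := m0 * s `^ (r ord0 - 1))).
    by apply: ler_wpM2r => //; exact: powR_ge0.
  rewrite -[X in _ <= X]mulr1; apply: ler_wpM2l; first exact: ltW.
  rewrite -[X in _ <= X](powRr0 s); apply: ger_powR; first by rewrite s0 hs.
  by rewrite subr_ge0.
- case: (leP s M1) => sM1.
    apply: (le_trans _ (Hm0 s (le_trans d11 hs) sM1)).
    apply: (le_trans (y := m0 / pw * s `^ (r ord_max - 1))).
      by apply: ler_wpM2r => //; exact: powR_ge0.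
    rewrite mulrAC ler_pdivrMr //; apply: ler_wpM2l; first exact: ltW.
    apply: ge0_ler_powR => //.
    + by rewrite subr_ge0.
    + by rewrite nnegrE ltW.
    + by rewrite nnegrE ltW.
  rewrite (@dsig_Pk _ _ c r (r ord_max) s s0) mulrC.
  apply: ler_wpM2l; first exact: powR_ge0.
  apply: (le_trans mkn); apply/ltW/HM; exact: (lt_trans M1M).
Qed.
End LB3.

Lemma pow_bound {R : realType} {sv C s rho q E : R} : 0 <= sv -> sv <= C * s `^ rho ->
  0 < C -> 0 < s -> 0 <= q -> s `^ (rho * q) <= s `^ E -> sv `^ q <= C `^ q * s `^ E.
Proof.
move=> sv0 svle C0 s0 q0 hE.
apply: (le_trans (y := (C * s `^ rho) `^ q)).
  apply: ge0_ler_powR => //; rewrite nnegrE //.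
  by apply: mulr_ge0; [exact: ltW|exact: powR_ge0].
rewrite powRM ?(ltW C0) ?powR_ge0 // -powRrM.
by apply: ler_wpM2l => //; exact: powR_ge0.
Qed.

Section Final.
Context {R : realType} {N : nat} (c r : 'I_N.+1 -> R).
Hypothesis Hr1 : forall i, 1 <= r i.
Hypothesis Hinc : forall i j : 'I_N.+1, (i < j)%N -> r i < r j.
Hypothesis Hc : forall i, c i != 0.
Hypothesis Hpos : forall s : R, 0 < s -> 0 < dsig c r s.
Hypothesis Hsig0 : forall s : R, 0 <= s -> 0 <= sig c r s.

Lemma psi_bound (a1 a2 p1 p2 : R) : 0 < a1 -> 0 < a2 -> 0 < p1 < 1 -> 1 < p2 ->
  exists b q1 q2, [/\ 0 < b, 0 < q1 < 1, 1 < q2 & forall s, 0 < s ->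
   b * (sig c r s) `^ q1 + b * (sig c r s) `^ q2 <= dsig c r s * (a1 * s `^ p1 + a2 * s `^ p2)].
Proof.
move=> a10 a20 /andP[p10 p11] p21.
have [m m0 Hm] := dsig_lb c r Hr1 Hinc Hc Hpos.
set r0 := r ord0 in Hm *; set rn := r ord_max in Hm *.
have r01 : 1 <= r0 := Hr1 _.
have rn1 : 1 <= rn := Hr1 _.
have r0n : r0 <= rn by exact: r_le.
set C := Csum c + 1.
have C0 : 0 < C by rewrite /C; have := Csum_ge0 c; lra.
set q1 := (r0 - 1 + p1) / r0.
set q2 := (rn - 1 + p2) / rn.
have r00 : 0 < r0 by lra.
have rn0 : 0 < rn by lra.
have q10 : 0 < q1 by rewrite /q1 divr_gt0 //; lra.
have q11 : q1 < 1 by rewrite /q1 ltr_pdivrMr // mul1r; lra.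
have q21 : 1 < q2 by rewrite /q2 ltr_pdivlMr // mul1r; lra.
have r0q1 : r0 * q1 = r0 - 1 + p1 by rewrite /q1 mulrC divfK // gt_eqF.
have rnq2 : rn * q2 = rn - 1 + p2 by rewrite /q2 mulrC divfK // gt_eqF.
set K := C `^ q1 + C `^ q2.
have K0 : 0 < K by rewrite /K addr_gt0 // powR_gt0.
set mn := Num.min a1 a2.
have mn0 : 0 < mn by rewrite lt_min a10 a20.
exists (m * mn / K), q1, q2; split => //.
  by rewrite divr_gt0 // mulr_gt0.
  by rewrite q10 q11.
move=> s s0.
have sg0 := Hsig0 s (ltW s0).
have dpos := Hpos s s0.
have bK : forall E, m * mn / K * (C `^ q1 * s `^ E) + m * mn / K * (C `^ q2 * s `^ E)
    = m * mn * s `^ E.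
  by move=> E; rewrite -mulrDr -mulrDl -/K mulrA divfK // gt_eqF.
have ps1 := powR_ge0 s p1; have ps2 := powR_ge0 s p2.
have [s1|s1] := leP s 1.
- have sle : sig c r s <= C * s `^ r0.
    apply: (le_trans (sig_le_small c r Hr1 Hinc s _)); first by rewrite (ltW s0) s1.
    by apply: ler_wpM2r; [exact: powR_ge0|rewrite /C lerDl].
  set E := r0 - 1 + p1.
  have H1 := pow_bound sg0 sle C0 s0 (ltW q10) (ltac:(by rewrite r0q1) : s `^ (r0 * q1) <= s `^ E).
  have H2 : sig c r s `^ q2 <= C `^ q2 * s `^ E.
    apply: (pow_bound sg0 sle C0 s0); first lra.
    apply: ger_powR; first by rewrite s0 s1.
    rewrite /E; nra.
  apply: (le_trans (y := m * mn * s `^ E)).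
    rewrite -bK; apply: lerD; apply: ler_wpM2l => //; apply: ltW; rewrite divr_gt0 // mulr_gt0 //.
  apply: (le_trans (y := (m * s `^ (r0 - 1)) * (a1 * s `^ p1))).
    rewrite [X in _ <= X]mulrACA -powRD ?(gt_eqF s0) ?implybT //.
    apply: ler_wpM2r; first exact: powR_ge0.
    apply: ler_wpM2l; first exact: ltW.
    by rewrite ge_min lexx.
  apply: ler_pM.
  + by apply: mulr_ge0; [exact: ltW|exact: powR_ge0].
  + by apply: mulr_ge0 => //; exact: ltW.
  + exact: (Hm s s0).1.
  + by rewrite lerDl mulr_ge0 // ltW.
- have s1' : 1 <= s by exact: ltW.
  have sle : sig c r s <= C * s `^ rn.
    apply: (le_trans (sig_le_big c r Hinc s s1')).
    by apply: ler_wpM2r; [exact: powR_ge0|rewrite /C lerDl].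
  set E := rn - 1 + p2.
  have H2 := pow_bound sg0 sle C0 s0 (ltW (lt_trans ltr01 q21)) (ltac:(by rewrite rnq2) : s `^ (rn * q2) <= s `^ E).
  have H1 : sig c r s `^ q1 <= C `^ q1 * s `^ E.
    apply: (pow_bound sg0 sle C0 s0); first lra.
    apply: ler_powR => //.
    rewrite /E; nra.
  apply: (le_trans (y := m * mn * s `^ E)).
    rewrite -bK; apply: lerD; apply: ler_wpM2l => //; apply: ltW; rewrite divr_gt0 // mulr_gt0 //.
  apply: (le_trans (y := (m * s `^ (rn - 1)) * (a2 * s `^ p2))).
    rewrite [X in _ <= X]mulrACA -powRD ?(gt_eqF s0) ?implybT //.
    apply: ler_wpM2r; first exact: powR_ge0.
    apply: ler_wpM2l; first exact: ltW.
    by rewrite ge_min lexx orbT.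
  apply: ler_pM.
  + by apply: mulr_ge0; [exact: ltW|exact: powR_ge0].
  + by apply: mulr_ge0 => //; exact: ltW.
  + exact: (Hm s s0).2.
  + by rewrite lerDr mulr_ge0 // ltW.
Qed.
End Final.

Section Chain.
Context {R : realType}.

Lemma deriv_approx (g : R -> R) (a d : R) : is_derive a 1 g d ->
  forall eta, 0 < eta -> exists2 del, 0 < del & forall z, `|z - a| < del ->
    `|g z - g a - d * (z - a)| <= eta * `|z - a|.
Proof.
move=> Hd eta eta0.
have H : (fun h : R => h^-1 *: ((g \o shift a) (h *: 1) - g a)) @ 0^' --> d.
  have H := @ex_derive _ _ _ _ _ _ _ Hd.
  have <- : 'D_1 g a = d := @derive_val _ _ _ _ _ _ _ Hd.
  exact: H.
move/cvgrPdist_le: H => /(_ eta eta0).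
rewrite near_withinE => /nbhs_ballP [del /= del0 Hdel].
exists del => // z za.
have [->|zna] := eqVneq z a.
  by rewrite !subrr mulr0 subrr normr0 mulr0.
have hz : z - a != 0 by rewrite subr_eq0.
have := Hdel (z - a); rewrite /ball /= sub0r normrN => /(_ za hz).
rewrite -[(z - a)%:A]/((z - a) * 1) mulr1 subrK -[_ *: _]/(_ * _).
rewrite -(@ler_pM2r _ `|z - a|); last by rewrite normr_gt0.
rewrite -normrM mulrBl.
by rewrite mulrAC mulVf // mul1r distrC.
Qed.

Lemma chain_pos (g b : R -> R) (a d y : R) : 0 < d -> is_derive a 1 g d ->
  (forall eta, 0 < eta -> \forall h \near 0^'+, `|b h - a| < eta) ->
  (forall e, 0 < e -> \forall h \near 0^'+, (b h - a) / h <= y + e) ->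
  forall e, 0 < e -> \forall h \near 0^'+, (g (b h) - g a) / h <= d * y + e.
Proof.
move=> d0 Hd Hb Hq e e0.
set e1 := Num.min 1 (e / (2 * (d + 1))).
set eta := Num.min d (e / (2 * (`|y| + 2))).
have e10 : 0 < e1 by rewrite lt_min ltr01 /= divr_gt0 //; lra.
have eta0 : 0 < eta by rewrite lt_min d0 /= divr_gt0 //; have := normr_ge0 y; lra.
have he1 : 2 * (d + 1) * e1 <= e.
  rewrite mulrC -ler_pdivlMr; last lra.
  by rewrite ge_min lexx orbT.
have heta : 2 * (`|y| + 2) * eta <= e.
  rewrite mulrC -ler_pdivlMr; last by have := normr_ge0 y; lra.
  by rewrite ge_min lexx orbT.
have etad : eta <= d by rewrite ge_min lexx.
have e11 : e1 <= 1 by rewrite ge_min lexx.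
have [del del0 Hdel] := @deriv_approx g a d Hd eta eta0.
near=> h.
have h0 : 0 < h by near: h; exact: nbhs_right_gt.
have hb : `|b h - a| < del by near: h; exact: Hb.
have hq : (b h - a) / h <= y + e1 by near: h; exact: Hq.
have := Hdel _ hb.
set q := (b h - a) / h in hq.
have bq : b h - a = q * h by rewrite /q divfK // gt_eqF.
rewrite bq normrM (gtr0_norm h0) => Hap.
have D1 : g (b h) - g a <= h * (d * q + eta * `|q|).
  have := ler_norm (g (b h) - g a - d * (q * h)).
  move=> /le_trans /(_ Hap) => H1; nra.
have D2 : (g (b h) - g a) / h <= d * q + eta * `|q|.
  by rewrite ler_pdivrMr // mulrC.
apply: (le_trans D2).
have ya := ler_norm y; have yb : - y <= `|y| by rewrite -normrN ler_norm.
have [q0|q0] := leP 0 q.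
  rewrite ger0_norm //.
  have : (d + eta) * q <= (d + eta) * (y + e1) by apply: ler_wpM2l => //; lra.
  nra.
rewrite ltr0_norm //.
have : (d - eta) * q <= (d - eta) * (y + e1) by apply: ler_wpM2l => //; lra.
nra.
Unshelve. all: by end_near. Qed.

Lemma chain_zero (g b : R -> R) (C y : R) : 0 <= C -> y <= 0 -> g 0 = 0 ->
  (forall z, 0 <= z -> z <= 1 -> g z <= C * z) -> (forall h, 0 <= b h) ->
  (forall e, 0 < e -> \forall h \near 0^'+, (b h - 0) / h <= y + e) ->
  forall e, 0 < e -> \forall h \near 0^'+, (g (b h) - g 0) / h <= e.
Proof.
move=> C0 y0 g0 Hg Hb0 Hq e e0.
set e1 := Num.min 1 (e / (C + 1)).
have e10 : 0 < e1 by rewrite lt_min ltr01 /= divr_gt0 //; lra.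
have e11 : e1 <= 1 by rewrite ge_min lexx.
have he1 : (C + 1) * e1 <= e.
  rewrite mulrC -ler_pdivlMr; last lra.
  by rewrite ge_min lexx orbT.
near=> h.
have h0 : 0 < h by near: h; exact: nbhs_right_gt.
have h1 : h < 1 by near: h; apply: nbhs_right_lt; exact: ltr01.
have hq : (b h - 0) / h <= y + e1 by near: h; exact: Hq.
rewrite subr0 in hq; rewrite g0 subr0.
have ble : b h <= e1 * h by rewrite -ler_pdivrMr //; lra.
have b1 : b h <= 1 by nra.
have := Hg _ (Hb0 h) b1 => gb.
rewrite ler_pdivrMr //.
have bh0 := Hb0 h.
nra.
Unshelve. all: by end_near. Qed.
End Chain.

Theorem lemma7 (R : realType) (n m : nat)
  (f : 'rV[R]_n -> 'rV[R]_m -> 'rV[R]_n) (V : 'rV[R]_n -> R)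
  (N : nat) (c r : 'I_N -> R) :
  continuous (fun p : 'rV[R]_n * 'rV[R]_m => f p.1 p.2) ->
  f 0 0 = 0 ->
  FxT_ISS_Lyapunov f V ->
  (forall i : 'I_N, 1 <= r i) ->
  (forall i j : 'I_N, (i < j)%N -> r i < r j) ->
  (forall i : 'I_N, c i != 0) ->
  let sigma := fun s : R => \sum_(i < N) c i * s `^ r i in
  Kinf sigma ->
  (forall s : R, 0 < s -> 0 < derive1 sigma s) ->
  FxT_ISS_Lyapunov f (fun x => sigma (V x)).
Proof.
move=> _ _ [HVlip [HV0 [al [au [chi [Psi [[Kal Kau Kchi KPsi Hbnd] Hdec]]]]]]].
case: N c r => [|N] c r Hr1 Hinc Hc sigma Ksig Hder.
  exfalso; case: Ksig => _ _ _ /(_ 0) [s [_]].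
  by rewrite /sigma big_ord0 ltxx.
have Ks : Kinf (sig c r) := Ksig.
have Hpos : forall s : R, 0 < s -> 0 < dsig c r s.
  by move=> s s0; rewrite -sig_derive1 //; exact: Hder.
have Hsig0 : forall s : R, 0 <= s -> 0 <= sig c r s.
  by move=> s s0; exact: Kinf_ge0.
have Hcont : {within `[0, +oo[, continuous (sig c r)} by case: Ks.
have sig00 : sig c r 0 = 0 by case: Ks.
change (FxT_ISS_Lyapunov f (fun x => sig c r (V x))).
case: KPsi => [a1 [a2 [p1 [p2 [a10 a20 p1b p21 HPsi]]]]].
have [b [q1 [q2 [b0 q1b q21 Hb]]]] := psi_bound c r Hr1 Hinc Hc Hpos Hsig0 a1 a2 p1 p2 a10 a20 p1b p21.
split.
  move=> x; have [d d0 [L HL]] := HVlip x.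
  have xx : enorm (x - x) < d by rewrite subrr enorm0.
  set K := V x + `|L| * d.
  have K0 : 0 <= K by rewrite /K addr_ge0 // mulr_ge0 // ltW.
  have Vb : forall w, enorm (w - x) < d -> V w <= K.
    move=> w hw; have := HL w x hw xx.
    have := enorm_ge0 (w - x) => e0.
    have : L * enorm (w - x) <= `|L| * d.
      apply: (le_trans (y := `|L| * enorm (w - x))).
        by apply: ler_wpM2r => //; exact: ler_norm.
      by apply: ler_wpM2l => //; exact: ltW.
    move=> H1 H2; have := ler_norm (V w - V x); rewrite /K; lra.
  exists d => //; exists (Lsig c r K * L) => y z hy hz.
  apply: (le_trans (sig_lip c r Hr1 Hcont K (V y) (V z) (HV0 y) (Vb y hy) (HV0 z) (Vb z hz))).
  rewrite -mulrA; apply: ler_wpM2l; first exact: Lsig_ge0.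
  exact: HL.
split; first by move=> x; exact: Hsig0.
exists (fun s => sig c r (al s)), (fun s => sig c r (au s)), (fun s => sig c r (chi s)),
  (fun s => b * s `^ q1 + b * s `^ q2).
split.
  split.
  - exact: Kinf_comp.
  - exact: Kinf_comp.
  - exact: Kinf_comp.
  - by exists b, b, q1, q2; split.
  - move=> x; have [h1 h2] := Hbnd x; split.
      by apply: (@Kinf_le _ _ _ _ Ks) => //; exact: (@Kinf_ge0 _ _ _ Kal (enorm_ge0 x)).
    by apply: (@Kinf_le _ _ _ _ Ks) => //; exact: HV0.
move=> x u hu.
have hchi : chi (enorm u) <= V x.
  exact: (@Kinf_le_inv _ _ _ _ Ks (@Kinf_ge0 _ _ _ Kchi (enorm_ge0 u)) (HV0 x) hu).
have HD := Hdec x u hchi.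
rewrite /DV in HD *.
set v := f x u in HD *.
have Hq : forall e, 0 < e -> \forall h \near 0^'+, (V (x + h *: v) - V x) / h <= - Psi (V x) + e.
  move=> e' e0'; exact: (esup_le_near _ _ _ HD).
apply: near_le_esup => e e0 /=.
have Psi0 : forall s, 0 <= s -> 0 <= Psi s.
  move=> s _; rewrite HPsi; apply: addr_ge0; apply: mulr_ge0;
    by [exact: ltW|exact: powR_ge0].
have [Vx0|Vx0] := eqVneq (V x) 0.
  rewrite Vx0 in Hq.
  have Hg : forall z, 0 <= z -> z <= 1 -> sig c r z <= Csum c * z.
    move=> z z0 z1.
    apply: (le_trans (sig_le_small c r Hr1 Hinc z _)); first by rewrite z0 z1.
    apply: ler_wpM2l; first exact: Csum_ge0.
    move: z0; rewrite le_eqVlt => /predU1P[<-|zp].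
      by rewrite powR0 // gt_eqF // (lt_le_trans ltr01 (Hr1 _)).
    by apply: ge1r_powR; [rewrite zp z1|exact: Hr1].
  have Py : - Psi 0 <= 0 by rewrite oppr_le0; exact: Psi0.
  have := @chain_zero R (sig c r) (fun h => V (x + h *: v)) (Csum c) (- Psi 0)
    (Csum_ge0 c) Py sig00 Hg (fun h => HV0 _) Hq e e0.
  apply: filterS => h /= hle.
  rewrite Vx0 sig00 !powR0 ?gt_eqF ?mulr0 ?addr0 ?oppr0 ?add0r ?addr0 //.
  - by rewrite sig00 subr0 in hle.
  - exact: (lt_trans ltr01 q21).
  - by case/andP: q1b.
have Vxp : 0 < V x by rewrite lt_neqAle eq_sym Vx0 HV0.
have Hb' : forall eta, 0 < eta -> \forall h \near 0^'+, `|V (x + h *: v) - V x| < eta.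
  move=> eta eta0.
  have [d d0 [L HL]] := HVlip x.
  have xx : enorm (x - x) < d by rewrite subrr enorm0.
  set ev := enorm v.
  have ev0 : 0 <= ev := enorm_ge0 v.
  have L0 := normr_ge0 L; have LL := ler_norm L.
  set del := Num.min (d / (ev + 1)) (eta / ((`|L| + 1) * (ev + 1))).
  have del0 : 0 < del.
    by rewrite lt_min !divr_gt0 // ?mulr_gt0 //; lra.
  near=> h.
  have h0 : 0 < h by near: h; exact: nbhs_right_gt.
  have hd : h < del by near: h; exact: nbhs_right_lt.
  have h1 : h * (ev + 1) < d.
    rewrite -ltr_pdivlMr; last lra.
    by apply: (lt_le_trans hd); rewrite ge_min lexx.
  have h2 : h * ((`|L| + 1) * (ev + 1)) < eta.
    rewrite -ltr_pdivlMr; last by apply: mulr_gt0; lra.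
    by apply: (lt_le_trans hd); rewrite ge_min lexx orbT.
  have en : enorm (x + h *: v - x) = h * ev.
    by rewrite addrC addKr enormZ gtr0_norm.
  have hin : enorm (x + h *: v - x) < d by rewrite en; nra.
  have := HL (x + h *: v) x hin xx; rewrite en => H.
  apply: (le_lt_trans H).
  have pp1 : 0 <= h * ev by rewrite mulr_ge0 // ltW.
  have pp2 : L * (h * ev) <= `|L| * (h * ev) by rewrite ler_wpM2r.
  have pp3 : 0 <= `|L| * h by rewrite mulr_ge0 // ltW.
  apply: (le_lt_trans pp2); apply: le_lt_trans h2; nra.
have := @chain_pos R (sig c r) (fun h => V (x + h *: v)) (V x) (dsig c r (V x)) (- Psi (V x)) (Hpos _ Vxp) (sig_is_derive c r _ Vxp) Hb' Hq e e0.
apply: filterS => h /= hle; apply: (le_trans hle); rewrite lerD2r.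
have := Hb _ Vxp; rewrite -HPsi mulrN lerN2.
done.
Unshelve. all: by end_near. Qed.
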